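(* Let $q\ge2$ and $L\ge2$ be integers, let $\mathcal{C}\subseteq[q]^n$ be a code, and suppose the matrix $\varphi(\mathcal{C})/\sqrt{(q-1)n}$ satisfies RIP-2 of order $L$ with constant $1/2$. Then for every set of $L$ distinct codewords $c_1,\dots,c_L\in\mathcal{C}$, the average pairwise relative distance $\binom{L}{2}^{-1}\sum_{1\le i<j\le L}\delta(c_i,c_j)$ is at least $\big(1-\frac1q\big)\big(1-\frac{1}{2(L-1)}\big)$.
   Context: $[q]=\{0,1,\dots,q-1\}$; $\delta(x,y)$ is the fraction of coordinates where $x,y\in[q]^n$ differ. Simplex encoding: for $x\in[q]$, $\varphi(x)\in\mathbb{C}^{q-1}$ has coordinates $\varphi(x)(\alpha)=\omega^{x\alpha}$ for $\alpha\in\{1,\dots,q-1\}$, $\omega=e^{2\pi\mathbf{i}/q}$; for $x\in[q]^n$, $\varphi(x)\in\mathbb{C}^{n(q-1)}$ is the concatenation of $\varphi(x_1),\dots,\varphi(x_n)$. For a code $\mathcal{C}\subseteq[q]^n$, $\varphi(\mathcal{C})$ is the $(q-1)n\times|\mathcal{C}|$ complex matrix whose columns are indexed by $c\in\mathcal{C}$, the column for $c$ being $\varphi(c)$. A matrix $M\in\mathbb{C}^{m\times N}$ satisfies RIP-2 of order $k$ with constant $\delta$ if for every $x\in\mathbb{C}^N$ with at most $k$ nonzero entries, $(1-\delta)\|x\|_2^2\le\|Mx\|_2^2\le(1+\delta)\|x\|_2^2$ (Euclidean norms). *)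

(* Defs.v *)
From HB Require Import structures.
From mathcomp Require Import all_boot all_order all_algebra.
From mathcomp Require Import reals trigo.
From mathcomp Require Export complex.
Set Implicit Arguments. Unset Strict Implicit. Unset Printing Implicit Defensive.
Import Order.TTheory GRing.Theory Num.Theory.
Local Open Scope ring_scope.
Local Open Scope complex_scope.

Definition word (q n : nat) := {ffun 'I_n -> 'I_q}.

Definition reldist (R : realType) (q n : nat) (x y : word q n) : R :=
  #|[set i | x i != y i]|%:R / n%:R.

Definition omega (R : realType) (q : nat) : R[i] :=
  (cos (2 * pi / q%:R))%:C + 'i * (sin (2 * pi / q%:R))%:C.

(* simplex encoding of a word: the concatenation of phi(x_1),...,phi(x_n),
   phi(x_t)(alpha) = omega^(x_t * alpha), alpha = 1..q-1 (stored at a = alpha-1).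
   mxvec is row-major, so entry (t, a) sits at position t*(q-1)+a. *)
Definition phi_word (R : realType) (q n : nat) (x : word q n) : 'rV[R[i]]_(n * q.-1) :=
  mxvec (\matrix_(t < n, a < q.-1) omega R q ^+ ((x t : nat) * a.+1)).

Definition phi_code (R : realType) (q n : nat) (C : {set word q n})
  : 'M[R[i]]_(n * q.-1, #|C|) :=
  \matrix_(r, j) (phi_word R (enum_val j)) ord0 r.

Definition sqnorm (R : realType) (m : nat) (v : 'cV[R[i]]_m) : R[i] :=
  \sum_(r < m) `|v r ord0| ^+ 2.

Definition RIP2 (R : realType) (m N : nat) (M : 'M[R[i]]_(m, N)) (k : nat) (delta : R) :=
  forall x : 'cV[R[i]]_N, (#|[set j | x j ord0 != 0%R]| <= k)%N ->
    (1 - delta%:C) * sqnorm x <= sqnorm (M *m x) <= (1 + delta%:C) * sqnorm x.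

(* Main.v *)
Require Import Defs.
From HB Require Import structures.
From mathcomp Require Import all_boot all_order all_algebra.
From mathcomp Require Import reals trigo complex.
From mathcomp Require Import ring lra zify.
Import Order.TTheory GRing.Theory Num.Theory.
Local Open Scope ring_scope.
Local Open Scope complex_scope.
Lemma cpolar (R : realType) (a b : R) : a%:C + 'i * b%:C = a +i* b.
Proof. by simpc. Qed.
Lemma cmul_polar (R : realType) (a b c d : R) : (a%:C + 'i*b%:C) * (c%:C + 'i*d%:C) = (a*c - b*d)%:C + 'i*(b*c + a*d)%:C.
Proof. rewrite !cpolar. simpc. congr (_ +i* _); ring. Qed.

Section S.
Variable R : realType.
Variable q : nat.
Hypothesis q2 : (2 <= q)%N.
Let th : R := 2 * pi / q%:R.

Lemma omegaX k : omega R q ^+ k = (cos (k%:R * th))%:C + 'i * (sin (k%:R * th))%:C.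
Proof.
elim: k => [|k IH]; first by rewrite mul0r cos0 sin0 mulr0 addr0 expr0.
rewrite exprS IH /omega -/th cmul_polar -addn1 natrD (mulrDl (k%:R) 1 th) mul1r (addrC (k%:R * th)) cosD sinD.
done.
Qed.

Lemma qR0 : q%:R != 0 :> R.
Proof. by rewrite pnatr_eq0 -lt0n; apply: leq_trans q2. Qed.

Lemma omega_q : omega R q ^+ q = 1.
Proof.
rewrite omegaX.
have -> : q%:R * th = pi *+ 2 by rewrite /th -mulr_natr; field; rewrite qR0.
rewrite cos2pi sin2pi.
by rewrite mulr0 addr0.
Qed.

Lemma omega_neq1 k : (0 < k < q)%N -> omega R q ^+ k != 1.
Proof.
move=> /andP [k0 kq]; apply/negP => /eqP h.
have hc : cos (k%:R * th) = 1.
  by move: h; rewrite omegaX cpolar => -[].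
pose y : R := k%:R * pi / q%:R.
have hy : k%:R * th = y *+ 2.
  by rewrite /y /th -mulr_natr; field; rewrite qR0.
rewrite hy cos_mulr2n in hc.
have hs : sin y = 0.
  have : sin y ^+ 2 = 0 by rewrite sin2cos2; lra.
  by move/eqP; rewrite expf_eq0 /= => /eqP.
have : 0 < sin y.
  apply: sin_gt0_pi; apply/andP; split.
    by rewrite /y divr_gt0 ?mulr_gt0 ?pi_gt0 ?ltr0n // (leq_trans _ q2).
  rewrite /y ltr_pdivrMr ?ltr0n ?(leq_trans _ q2) // mulrC ltr_pM2l ?pi_gt0 //.
  by rewrite ltr_nat.
by rewrite hs ltxx.
Qed.

Notation w := (omega R q).

Lemma omega_neq0 : w != 0.
Proof. apply/negP => /eqP h; have := omega_q; rewrite h expr0n.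
have -> : (q == 0%N) = false by case: q q2.
by move/eqP; rewrite eq_sym oner_eq0. Qed.

Lemma omegaJ : w^*%C = w ^+ q.-1.
Proof.
apply: (mulIf omega_neq0).
rewrite -exprSr prednK ?(leq_trans _ q2) // omega_q.
rewrite /omega !cpolar; simpc; rewrite -!expr2 cos2Dsin2.
by congr (_ +i* _); ring.
Qed.

Lemma geo (z : R[i]) m : z ^+ m.+1 = 1 -> z != 1 -> \sum_(a < m) z ^+ a.+1 = -1.
Proof.
move=> hz nz; have := subrX1 z m.+1; rewrite hz subrr => /esym/eqP.
rewrite mulf_eq0 subr_eq0 (negbTE nz) /= big_ord_recl expr0 => /eqP h.
by apply/eqP; rewrite -(subr_eq0 _ (-1)) opprK addrC h.
Qed.

Lemma inner_coord (x y : 'I_q) :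
  \sum_(a < q.-1) w ^+ (x * a.+1) * (w ^+ (y * a.+1))^*%C
  = if x == y then q.-1%:R else -1.
Proof.
have E a : w ^+ (x * a.+1) * (w ^+ (y * a.+1))^*%C = (w ^+ (x + q.-1 * y)) ^+ a.+1.
  have cX m : (w ^+ m)^*%C = (w^*%C) ^+ m by elim: m => [|m IH]; rewrite ?expr0 ?conjc1 // !exprS rmorphM /= IH.
  rewrite cX omegaJ -!exprM -exprD; congr (_ ^+ _); ring.
under eq_bigr => a _ do rewrite E.
have q0 : (0 < q)%N by apply: leq_trans q2.
case: eqP => [<-|/eqP nxy].
  have -> : w ^+ (x + q.-1 * x) = 1.
    by rewrite -{1}(mul1n x) -mulnDl add1n prednK // exprM omega_q expr1n.
  by under eq_bigr => a _ do rewrite expr1n; rewrite sumr_const card_ord.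
set e := (x + q.-1 * y)%N.
have he : (0 < e %% q < q)%N.
  rewrite ltn_pmod // lt0n andbT; apply/negP => /eqP he.
  have h1 : ((e + y) %% q = y)%N by rewrite -modnDml he add0n modn_small.
  have h2 : (e + y = q * y + x)%N.
    by rewrite /e -addnA -{2}(mul1n y) -mulnDl addn1 prednK // addnC.
  move: h1; rewrite h2 mulnC modnMDl modn_small // => /val_inj hxy.
  by rewrite hxy eqxx in nxy.
have ez : w ^+ e = w ^+ (e %% q).
  by rewrite {1}(divn_eq e q) exprD mulnC exprM omega_q expr1n mul1r.
rewrite -(prednK q0) geo ?prednK //.
  by rewrite -exprM mulnC exprM omega_q expr1n.
by rewrite ez omega_neq1.
Qed.

Lemma sum_mxvec m1 m2 (F : 'I_(m1 * m2) -> R[i]) :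
  \sum_k F k = \sum_i \sum_j F (mxvec_index i j).
Proof.
rewrite pair_big /=.
rewrite (reindex (fun p : 'I_m1 * 'I_m2 => mxvec_index p.1 p.2)) //=.
case: (@curry_mxvec_bij m1 m2) => g h1 h2.
exists g => [[i j] _|k _]; [exact: (h1 (i, j)) | ]. have := h2 k isT. by case: (g k). 
Qed.

Definition hd {n} (x y : word q n) : nat := #|[set t | x t != y t]|.

Lemma ip_phi n (x y : word q n) :
  \sum_(r < n * q.-1) phi_word R x 0 r * (phi_word R y 0 r)^*%C
  = (n * q.-1)%:R - q%:R * (hd x y)%:R.
Proof.
have q0 : (0 < q)%N by apply: leq_trans q2.
rewrite sum_mxvec.
under eq_bigr => t _ do under eq_bigr => a _ do rewrite /phi_word !mxvecE !mxE.
under eq_bigr => t _ do rewrite inner_coord.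
transitivity (\sum_(t < n) (q.-1%:R - q%:R * (x t != y t)%:R : R[i])).
  apply: eq_bigr => t _; case: eqP => _ /=; first by rewrite mulr0 subr0.
  by rewrite mulr1 -{2}(prednK q0) -addn1 natrD opprD addrA subrr add0r.
rewrite sumrB sumr_const card_ord -mulrnA mulnC -mulr_sumr; congr (_ - _ * _).
rewrite /hd -sum1_card natr_sum [in RHS]big_mkcond /=; apply: eq_bigr => t _.
by rewrite inE; case: (_ != _).
Qed.
End S.

Lemma final (R : realType) (qr Lr nr D : R) : 2 <= qr -> 2 <= Lr -> 0 < nr ->
  0 <= (1 + 1/2) * Lr - ((qr-1)*nr)^-1 * (Lr*Lr*((qr-1)*nr) - qr*(2*D)) ->
  (1-1/qr)*(1-1/(2*(Lr-1))) <= (D/nr) / (Lr*(Lr-1)/2).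
Proof.
move=> hq hL hn H.
set X := (qr - 1) * nr.
have X0 : 0 < X by rewrite /X mulr_gt0 //; lra.
rewrite -subr_ge0.
have -> : D / nr / (Lr * (Lr - 1) / 2) - (1 - 1 / qr) * (1 - 1 / (2 * (Lr - 1)))
   = X * ((1 + 1/2) * Lr - X^-1 * (Lr*Lr*X - qr*(2*D))) / (qr * nr * Lr * (Lr - 1)).
  rewrite /X; field.
  apply/and5P; split; apply/eqP; lra || (try (apply/eqP; rewrite ?mulf_eq0 ?negb_or; apply/andP; split; apply/eqP; lra)).
apply: divr_ge0; first by rewrite mulr_ge0 // ltW.
rewrite !mulr_ge0 //; lra.
Qed.

Lemma natr_pred (K : nzRingType) m : (0 < m)%N -> (m.-1)%:R = m%:R - 1 :> K.
Proof. by case: m => // m _; rewrite /= mulrSr addrK. Qed.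

Lemma sym_sum (L : nat) (f : 'I_L -> 'I_L -> nat) :
  (forall i j, f i j = f j i) -> (forall i, f i i = 0%N) ->
  (\sum_(i < L) \sum_(j < L) f i j = 2 * \sum_(i < L) \sum_(j < L | (i < j)%N) f i j)%N.
Proof.
move=> fs fd.
have E (i : 'I_L) : (\sum_(j < L) f i j = \sum_(j < L | (i < j)%N) f i j + \sum_(j < L | (j < i)%N) f i j)%N.
  rewrite (bigID (fun j : 'I_L => (i < j)%N)) /=; congr (_ + _)%N.
  rewrite (bigID (fun j : 'I_L => (j < i)%N)) /= [X in (_ + X)%N]big1 ?addn0.
    by apply: eq_bigl => j; rewrite -leqNgt; case: ltngtP.
  move=> j; rewrite -leqNgt -leqNgt => /andP [h1 h2].
  by have -> : j = i by apply/val_inj/anti_leq; rewrite h1 h2.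
under eq_bigr => i _ do rewrite E.
rewrite big_split /= mul2n -addnn; congr (_ + _)%N.
under eq_bigr => i _ do rewrite big_mkcond.
rewrite exchange_big; apply: eq_bigr => i _; rewrite [RHS]big_mkcond.
by apply: eq_bigr => j _; rewrite fs.
Qed.

Lemma sqrnC (R : realType) (x : R[i]) : `|x| ^+ 2 = x * x^*%C.
Proof. exact: normCK. Qed.

Lemma abs_b2 (R : realType) (b : bool) : `|(b%:R : R[i])| ^+ 2 = b%:R.
Proof. by case: b; rewrite ?normr1 ?normr0 ?expr1n ?expr0n. Qed.

Theorem lemma3p4 (R : realType) (q L n : nat) (C : {set word q n}) :
  (2 <= q)%N -> (2 <= L)%N ->
  RIP2 ((sqrtC ((q.-1 * n)%:R : R[i]))^-1 *: phi_code R C) L (1 / 2) ->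
  forall c : 'I_L -> word q n, injective c -> (forall i, c i \in C) ->
    (1 - 1 / q%:R) * (1 - 1 / (2 * (L.-1)%:R))
      <= (\sum_(i < L) \sum_(j < L | (i < j)%N) reldist R (c i) (c j)) / ('C(L, 2))%:R.
Proof.
move=> q2 L2 hRIP c cinj cC.
have q0 : (0 < q)%N by apply: leq_trans q2.
have L0 : (0 < L)%N by apply: leq_trans L2.
have n0 : (0 < n)%N.
  case: n C c cinj cC {hRIP} => // C c cinj _.
  have h : c (Ordinal L0) = c (Ordinal L2) by apply/ffunP => -[].
  by move: (cinj _ _ h) => /(congr1 val).
pose S : {set word q n} := [set c i | i : 'I_L].
have SC : {subset S <= C} by move=> w /imsetP [i _ ->].
pose xv : 'cV[R[i]]_#|C| := \col_j ((enum_val j \in S)%:R).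
have sum_sel (F : word q n -> R[i]) :
    \sum_(j < #|C|) (enum_val j \in S)%:R * F (enum_val j) = \sum_i F (c i).
  rewrite -(big_enum_val (fun w => (w \in S)%:R * F w)) /=.
  transitivity (\sum_(w in S) F w).
    rewrite big_mkcond [RHS]big_mkcond; apply: eq_bigr => w _.
    case: (boolP (w \in S)) => wS; first by rewrite (SC _ wS) mul1r.
    by rewrite mul0r; case: (w \in C).
  by rewrite big_imset //=; move=> i j _ _; apply: cinj.
have supp : (#|[set j | xv j ord0 != 0%R]| <= L)%N.
  have -> : [set j | xv j ord0 != 0%R] = [set j | enum_val j \in S].
    by apply/setP => j; rewrite !inE mxE pnatr_eq0 eqb0 negbK.
  rewrite -(card_imset _ enum_val_inj).
  apply: (leq_trans (subset_leq_card (_ : _ \subset S))).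
    by apply/subsetP => w /imsetP [j]; rewrite inE => h ->.
  by apply: (leq_trans (leq_imset_card _ _)); rewrite card_ord.
have nx : sqnorm xv = L%:R.
  rewrite /sqnorm.
  under eq_bigr => j _ do rewrite mxE abs_b2 -(mulr1 ((_ \in S)%:R)).
  by rewrite (sum_sel (fun _ => 1)) sumr_const card_ord.
pose u (i : 'I_L) (r : 'I_(n * q.-1)) : R[i] := phi_word R (c i) 0 r.
have Px r : (phi_code R C *m xv) r ord0 = \sum_i u i r.
  rewrite mxE -(sum_sel (fun w => phi_word R w 0 r)).
  by apply: eq_bigr => j _; rewrite !mxE mulrC.
have nP : sqnorm (phi_code R C *m xv) =
    (L * L * (n * q.-1))%:R - q%:R * (\sum_i \sum_j hd q (c i) (c j))%:R.
  rewrite /sqnorm.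
  transitivity (\sum_r `|\sum_i u i r| ^+ 2); first by apply: eq_bigr => r _; rewrite Px.
  have t r : `|\sum_i u i r| ^+ 2 = (\sum_i u i r) * (\sum_i u i r)^*%C by apply: sqrnC.
  transitivity (\sum_r \sum_i \sum_j u i r * (u j r)^*%C).
    apply: eq_bigr => r _; rewrite t rmorph_sum /= mulr_suml.
    by apply: eq_bigr => i _; rewrite mulr_sumr.
  rewrite exchange_big /=.
  under eq_bigr => i _ do rewrite exchange_big /=.
  under eq_bigr => i _ do under eq_bigr => j _ do rewrite ip_phi //.
  under eq_bigr => i _ do rewrite sumrB sumr_const card_ord -mulr_sumr -natr_sum.
  rewrite sumrB sumr_const card_ord -mulr_sumr -natr_sum.
  by rewrite -!mulrnA mulnC mulnA.
have [_ hup] := andP (hRIP xv supp).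
move: hup; rewrite -scalemxAl.
have sqZ (a : R[i]) m (v : 'cV[R[i]]_m) : sqnorm (a *: v) = `|a| ^+ 2 * sqnorm v.
  by rewrite /sqnorm mulr_sumr; apply: eq_bigr => r _; rewrite mxE normrM exprMn.
rewrite sqZ nP nx normfV exprVn -normrX sqrtCK normr_nat.
pose Dn := (\sum_(i < L) \sum_(j < L | (i < j)%N) hd q (c i) (c j))%N.
rewrite (@sym_sum L (fun i j => hd q (c i) (c j))); first last.
- by move=> i; rewrite /hd; apply/eqP; rewrite cards_eq0; apply/eqP/setP => t; rewrite !inE eqxx.
- by move=> i j; rewrite /hd; apply: eq_card => t; rewrite !inE eq_sym.
rewrite -/Dn => hup.
have hreal : 0 <= (1 + 1/2) * (L%:R : R) - ((q%:R - 1) * n%:R)^-1 *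
     (L%:R * L%:R * ((q%:R - 1) * n%:R) - q%:R * (2 * Dn%:R)).
  rewrite -ler0c; move: hup; rewrite -subr_ge0 => /le_trans; apply; rewrite le_eqVlt; apply/orP; left; apply/eqP.
  rewrite !(rmorphB, rmorphM, rmorphD, fmorphV, rmorph_nat, rmorph1) /=.
  rewrite (natr_pred _ _ q0) (mulrC n%:R); ring.

have -> : (\sum_(i < L) \sum_(j < L | (i < j)%N) reldist R (c i) (c j)) = Dn%:R / n%:R.
  rewrite /Dn natr_sum mulr_suml; apply: eq_bigr => i _.
  by rewrite natr_sum mulr_suml.
have -> : ('C(L, 2))%:R = (L%:R * (L%:R - 1) / 2 : R).
  have := mul_bin_diag L 1; rewrite bin1 => /(congr1 (fun m => m%:R : R)).
  rewrite !natrM natr_pred // => ->; by field.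
rewrite (natr_pred _ _ L0).
apply: final => //; rewrite ?ler_nat ?ltr0n //.
Qed.
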